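(* Let $r\ge 1$ and let $H$ be a graph with at least one edge. The join of $rK_1$ and $H$ is well-bicovered if and only if $H$ is both well-covered and well-bicovered, and $b(H)=r+\alpha(H)$.
   Context: All graphs are finite and simple; ''subgraph'' means induced subgraph. $rK_1$ is the edgeless graph on $r$ vertices. $b(G)$ denotes the maximum order of an induced bipartite subgraph of $G$. A graph is well-bicovered if every vertex-inclusion-maximal induced bipartite subgraph has the same order. A graph is well-covered if every maximal independent set has the same cardinality, namely the independence number $\alpha$. The join of two graphs is their disjoint union together with all edges between them. *)

(* Defs.v *)
(* Simple graphs: symmetric irreflexive rel on a finType. *)
From mathcomp Require Import all_boot.
Set Implicit Arguments. Unset Strict Implicit. Unset Printing Implicit Defensive.

Section Graphs.
Variable T : finType.
Variable e : rel T.

Definition independent (A : {set T}) : bool :=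
  [forall x in A, forall y in A, ~~ e x y].

Definition bipartite_set (S : {set T}) : bool :=
  [exists A : {set T}, (A \subset S) && independent A && independent (S :\: A)].

Definition maximal_independent (A : {set T}) : Prop :=
  independent A /\ forall v, v \notin A -> ~~ independent (v |: A).

Definition maximal_bipartite (S : {set T}) : Prop :=
  bipartite_set S /\ forall v, v \notin S -> ~~ bipartite_set (v |: S).

Definition alpha : nat := \max_(A : {set T} | independent A) #|A|.
Definition bip_number : nat := \max_(S : {set T} | bipartite_set S) #|S|.

Definition well_covered : Prop :=
  forall A B, maximal_independent A -> maximal_independent B -> #|A| = #|B|.

Definition well_bicovered : Prop :=
  forall S1 S2, maximal_bipartite S1 -> maximal_bipartite S2 -> #|S1| = #|S2|.
End Graphs.

Definition join_rel (T1 T2 : finType) (e1 : rel T1) (e2 : rel T2) : rel (T1 + T2) :=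
  fun x y => match x, y with
             | inl a, inl b => e1 a b
             | inr a, inr b => e2 a b
             | _, _ => true
             end.

Definition edgeless (r : nat) : rel 'I_r := fun _ _ => false.
Arguments edgeless r : clear implicits.

(* Main.v *)
Require Import Defs.
From mathcomp Require Import all_boot.
Set Implicit Arguments. Unset Strict Implicit.

Section Gen.
Variable T : finType.
Variable P : pred {set T}.
Definition genmax (M : {set T}) := P M /\ forall v, v \notin M -> ~~ P (v |: M).

Lemma extend X0 : P X0 -> exists M, genmax M /\ X0 \subset M.
Proof.
move=> PX0.
have Q0 : [pred M : {set T} | P M && (X0 \subset M)] X0 by rewrite /= PX0 subxx.
case: (@arg_maxnP _ X0 _ (fun M : {set T} => #|M|) Q0) => M /andP[PM sM] Mmax.
exists M; split=> //; split=> // v vM; apply/negP => Pv.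
have := Mmax (v |: M); rewrite /= Pv (subset_trans sM (subsetUr _ _)) => /(_ isT).
by rewrite cardsU1 vM add1n ltnn.
Qed.

Lemma max_size X0 : P X0 ->
  (forall A B, genmax A -> genmax B -> #|A| = #|B|) ->
  forall A, genmax A -> #|A| = \max_(B | P B) #|B|.
Proof.
move=> PX0 WB A mA.
have : 0 < #|P| by apply/card_gt0P; exists X0.
case/(eq_bigmax_cond (fun B : {set T} => #|B|)) => M PM eqM.
rewrite eqM; apply: WB => //; split=> // v vM; apply/negP => Pv.
have := @leq_bigmax_cond _ P (fun B : {set T} => #|B|) _ Pv.
by rewrite eqM cardsU1 vM add1n ltnn.
Qed.

Lemma le_max A : P A -> #|A| <= \max_(B | P B) #|B|.
Proof. move=> PA; exact: leq_bigmax_cond. Qed.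
End Gen.

Lemma indepP (T : finType) (e : rel T) (A : {set T}) :
  reflect (forall x y, x \in A -> y \in A -> ~~ e x y) (independent e A).
Proof.
apply: (iffP forall_inP) => [H x y xA yA | H x xA].
  by move: (H x xA) => /forall_inP; apply.
by apply/forall_inP => y yA; apply: H.
Qed.

Lemma indepE (T : finType) (e : rel T) (A : {set T}) :
  independent e A -> forall x y, x \in A -> y \in A -> ~~ e x y.
Proof. by move/indepP. Qed.
Arguments indepE {T e A} _ x y.

Lemma indep_bip (T : finType) (e : rel T) (A : {set T}) : independent e A -> bipartite_set e A.
Proof.
move=> iA; apply/existsP; exists A; rewrite subxx iA setDv /=.
by apply/indepP => x y; rewrite inE.
Qed.

Section G.
Variables (r : nat) (T : finType) (e : rel T).
Hypothesis r1 : 1 <= r.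
Hypothesis irr : irreflexive e.
Let eG := join_rel (edgeless r) e.
Let k0 : 'I_r := Ordinal r1.

Definition sK (S : {set 'I_r + T}) := [set k | inl k \in S].
Definition sH (S : {set 'I_r + T}) := [set t | inr t \in S].

Lemma card_split (S : {set _}) : #|S| = #|sK S| + #|sH S|.
Proof.
rewrite -!sum1_card big_sumType; congr (_ + _); apply: eq_bigl => x; by rewrite inE.
Qed.

Lemma sK_inl S k : sK (inl k |: S) = k |: sK S.
Proof. by apply/setP => z; rewrite !inE. Qed.
Lemma sH_inl S k : sH (inl k |: S) = sH S.
Proof. by apply/setP => z; rewrite !inE. Qed.
Lemma sK_inr S t : sK (inr t |: S) = sK S.
Proof. by apply/setP => z; rewrite !inE. Qed.
Lemma sH_inr S t : sH (inr t |: S) = t |: sH S.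
Proof. by apply/setP => z; rewrite !inE. Qed.

Lemma bipG S : bipartite_set eG S =
  if sK S == set0 then bipartite_set e (sH S) else independent e (sH S).
Proof.
apply/idP/idP.
- case/existsP => A /andP[/andP[sAS iA] iSA].
  case: ifP => [_|/set0Pn [k]].
    apply/existsP; exists [set t | inr t \in A]; apply/andP; split; [apply/andP; split|].
    + by apply/subsetP => t; rewrite !inE => /(subsetP sAS).
    + by apply/indepP => x y; rewrite !inE; apply: (indepE iA).
    + apply/indepP => x y; rewrite !inE => /andP[xA xS] /andP[yA yS].
      have := indepE iSA (inr x) (inr y). rewrite !inE xA yA xS yS. exact.
  rewrite inE => kS.
  apply/indepP => x y; rewrite !inE => xS yS.
  case kA: (inl k \in A).
    have xA : inr x \notin A.
      by apply/negP => xA; move: (indepE iA _ _ kA xA).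
    have yA : inr y \notin A.
      by apply/negP => yA; move: (indepE iA _ _ kA yA).
    by apply: (indepE iSA (inr x) (inr y)); rewrite inE ?xA ?yA.
  have kSA : inl k \in S :\: A by rewrite inE kA.
  have xA : inr x \in A.
    apply/negPn/negP => xA.
    have : inr x \in S :\: A by rewrite inE xA.
    by move=> h; move: (indepE iSA _ _ kSA h).
  have yA : inr y \in A.
    apply/negPn/negP => yA.
    have : inr y \in S :\: A by rewrite inE yA.
    by move=> h; move: (indepE iSA _ _ kSA h).
  exact: (indepE iA _ _ xA yA).
- case: ifP => [/eqP K0 | _ iH].
    case/existsP => A' /andP[/andP[sA' iA'] iSA'].
    apply/existsP; exists [set x | if x is inr t then t \in A' else false].
    apply/andP; split; [apply/andP; split|].
    + apply/subsetP => [[k|t]]; rewrite !inE // => /(subsetP sA'); by rewrite inE.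
    + by apply/indepP => [[k|t] [k'|t']]; rewrite !inE //; apply: (indepE iA').
    + have H : forall x, x \in S :\: [set x | if x is inr t then t \in A' else false] ->
          exists2 t, x = inr t & t \in sH S :\: A'.
        move=> [k|t]; rewrite !inE => /andP[tA kS].
          have : k \in sK S by rewrite inE.
          by rewrite K0 inE.
        by exists t => //; rewrite !inE tA kS.
      apply/indepP => x y /H [t -> tS] /H [u -> uS].
      exact: (indepE iSA' _ _ tS uS).
  apply/existsP; exists [set x in S | if x is inl _ then true else false].
  apply/andP; split; [apply/andP; split|].
  + by apply/subsetP => x; rewrite inE => /andP[].
  + apply/indepP => [[k|t] [k'|t']]; rewrite !inE //= ?andbF //.
  + apply/indepP => [[k|t] [k'|t']]; rewrite !inE ?andbF ?andbT //=.
    all: try by case/andP => /negP. all: try by move=> _ /andP[/negP]. by move=> tS uS; apply: (indepE iH); rewrite inE.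
Qed.

Definition emb (B : {set T}) : {set 'I_r + T} := [set x | if x is inr t then t \in B else false].
Definition full (A : {set T}) : {set 'I_r + T} := [set x | if x is inr t then t \in A else true].

Lemma sK_emb B : sK (emb B) = set0. Proof. by apply/setP => z; rewrite !inE. Qed.
Lemma sH_emb B : sH (emb B) = B. Proof. by apply/setP => z; rewrite !inE. Qed.
Lemma sK_full B : sK (full B) = setT. Proof. by apply/setP => z; rewrite !inE. Qed.
Lemma sH_full B : sH (full B) = B. Proof. by apply/setP => z; rewrite !inE. Qed.
Lemma card_emb B : #|emb B| = #|B|. Proof. by rewrite card_split sK_emb sH_emb cards0. Qed.
Lemma card_full B : #|full B| = r + #|B|. Proof. by rewrite card_split sK_full sH_full cardsT card_ord. Qed.

Lemma neq0 (k : 'I_r) (X : {set 'I_r}) : k \in X -> (X == set0) = false.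
Proof. by move=> kX; apply/eqP => X0; rewrite X0 inE in kX. Qed.

Lemma M1 B : maximal_bipartite e B -> ~~ independent e B -> maximal_bipartite eG (emb B).
Proof.
move=> [bB mB] nB; split; first by rewrite bipG sK_emb eqxx sH_emb.
move=> [k|t] vn.
  by rewrite bipG sK_inl sH_inl sH_emb (@neq0 k) // !inE eqxx.
rewrite bipG sK_inr sK_emb eqxx sH_inr sH_emb; apply: mB.
by move: vn; rewrite inE.
Qed.

Lemma M2 A : maximal_independent e A -> maximal_bipartite eG (full A).
Proof.
move=> [iA mA]; split; first by rewrite bipG sK_full (@neq0 k0) ?inE // sH_full.
move=> [k|t] vn; first by move: vn; rewrite inE.
rewrite bipG sK_inr sK_full (@neq0 k0) ?inE // sH_inr sH_full; apply: mA.
by move: vn; rewrite inE.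
Qed.

Lemma M3 S : maximal_bipartite eG S ->
  (sK S = set0 /\ maximal_bipartite e (sH S) /\ ~~ independent e (sH S)) \/
  (sK S = setT /\ maximal_independent e (sH S)).
Proof.
move=> [bS mS]; move: bS; rewrite bipG.
case: eqP => [K0 bH | /eqP K0 iH].
  left; split=> //; split.
    split=> // t tS.
    have := mS (inr t); rewrite bipG sK_inr K0 eqxx sH_inr; apply.
    by move: tS; rewrite inE.
  have kS : inl k0 \notin S by apply/negP => kS; move: (K0) => /setP/(_ k0); rewrite !inE kS.
  by have := mS _ kS; rewrite bipG sK_inl sH_inl (@neq0 k0) // !inE eqxx.
right; split.
  apply/setP => k; rewrite in_setT; apply/negPn/negP => kS.
  have kS' : inl k \notin S by rewrite inE in kS.
  by have := mS _ kS'; rewrite bipG sK_inl sH_inl (@neq0 k) ?iH // !inE eqxx.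
split=> // t tS.
have tS' : inr t \notin S by rewrite inE in tS.
by have := mS _ tS'; rewrite bipG sK_inr (negbTE K0) sH_inr.
Qed.
End G.

Lemma add_bip (T : finType) (e : rel T) (B : {set T}) v :
  irreflexive e -> independent e B -> bipartite_set e (v |: B).
Proof.
move=> irr iB; apply/existsP; exists B; rewrite subsetUr iB /=.
have H : forall a, a \in (v |: B) :\: B -> a = v.
  by move=> a; rewrite in_setD in_setU1 => /andP[naB /orP[/eqP -> | aB]] //; rewrite aB in naB.
by apply/indepP => a b /H -> /H ->; rewrite irr.
Qed.

Theorem mainTheorem3 (r : nat) (T : finType) (e : rel T) :
  1 <= r -> symmetric e -> irreflexive e -> (exists x y, e x y) ->
  (well_bicovered (join_rel (edgeless r) e) <->
   well_covered e /\ well_bicovered e /\ bip_number e = r + alpha e).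
Proof.
move=> r1 _ irr [x [y exy]].
have ind0 : independent e set0 by apply/indepP => ? ?; rewrite inE.
have bip0 : bipartite_set e set0 by apply: indep_bip.
have nonind : forall B, maximal_bipartite e B -> ~~ independent e B.
  move=> B [bB mB]; apply/negP => iB.
  have [xB | xB] := boolP (x \in B); last by case/negP: (mB _ xB); apply: add_bip.
  have [yB | yB] := boolP (y \in B); last by case/negP: (mB _ yB); apply: add_bip.
  by move: (indepE iB x y xB yB); rewrite exy.
split.
- move=> WB.
  have bxy : bipartite_set e [set x; y].
    apply: add_bip => //; apply/indepP => a b; rewrite !inE => /eqP -> /eqP ->.
    by rewrite irr.
  have [M [mM sM]] := extend bxy.
  have hB : forall B, maximal_bipartite e B -> #|B| = #|M|.
    move=> B mB; rewrite -(card_emb r B) -(card_emb r M); apply: WB; apply: M1 => //;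
    exact: nonind.
  have hA : forall A, maximal_independent e A -> r + #|A| = #|M|.
    move=> A mA; rewrite -(card_full r A) -(card_emb r M); apply: WB.
      exact: M2.
    by apply: M1 => //; exact: nonind.
  have WC : well_covered e.
    by move=> A B mA mB; apply: (@addnI r); rewrite !hA.
  have WBH : well_bicovered e by move=> A B mA mB; rewrite !hB.
  split=> //; split=> //.
  have e1 : bip_number e = #|M| := esym (max_size bip0 WBH mM).
  have [A0 [mA0 _]] := extend ind0.
  have e2 : alpha e = #|A0| := esym (max_size ind0 WC mA0).
  by rewrite e1 e2 hA.
- case=> [WC [WBH eqb]].
  suff h : forall S, maximal_bipartite (join_rel (edgeless r) e) S -> #|S| = r + alpha e.
    by move=> S1 S2 m1 m2; rewrite !h.
  move=> S mS; rewrite card_split; case: (M3 r1 mS) => [[-> [mH _]] | [-> mH]].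
    rewrite cards0 add0n -eqb; exact: (max_size bip0 WBH mH).
  rewrite cardsT card_ord; congr (_ + _); exact: (max_size ind0 WC mH).
Qed.
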